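(* Let $a$ be a limit point of a topological space $\mathfrak X$, and let $\{\varphi_n(x)\}_{n\ge1}$ be an asymptotic sequence over $\mathfrak X$ at $x=a$ such that each $\varphi_n$ is nonzero in a punctured neighbourhood of $a$. Let $\{\psi_n(x)\}_{n\ge1}$ be any sequence of complex-valued functions such that $\psi_n(x)-\varphi_n(x)=o(\varphi_m(x))$ $(x\to a)_{\mathfrak X}$ for all positive integers $n\le m$. Then $\{\psi_n(x)\}$ is also an asymptotic sequence over $\mathfrak X$ at $x=a$. Moreover, if $N$ is a positive integer or $\infty$, then for any complex-valued $f(x)$ and complex numbers $a_n$, the asymptotic expansion $f(x)\sim\sum_{n=1}^N a_n\varphi_n(x)$ $(x\to a)_{\mathfrak X}$ of order $N$ holds if and only if the asymptotic expansion $f(x)\sim\sum_{n=1}^N a_n\psi_n(x)$ $(x\to a)_{\mathfrak X}$ of order $N$ holds.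
   Context: $f=o(g)$ $(x\to a)_{\mathfrak X}$: for every $M>0$ there is a punctured neighbourhood $U\subseteq\mathfrak X$ of $a$ with $|f|\le M|g|$ on $U$. Asymptotic sequence at $a$: $\varphi_{n+1}=o(\varphi_n)$ for all $n$. Asymptotic expansion $f\sim\sum_{n=1}^N a_n\varphi_n$ of order $N$: $f-\sum_{k=1}^n a_k\varphi_k=o(\varphi_n)$ for all positive integers $n\le N$ (for $N=\infty$: for all $n$). *)

(* Defs.v *)
From HB Require Import structures.
From mathcomp Require Import all_boot all_order all_algebra.
From mathcomp Require Import all_classical all_reals topology.
From mathcomp Require Import complex.
Set Implicit Arguments. Unset Strict Implicit. Unset Printing Implicit Defensive.
Import Order.TTheory GRing.Theory Num.Theory.
Local Open Scope ring_scope.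
Local Open Scope complex_scope.

Section Defs.
Variables (R : realType) (T : topologicalType).
Notation C := (R[i]).

Definition near_punct (X : set T) (a : T) (P : T -> Prop) : Prop :=
  exists V : set T, nbhs a V /\ forall x, V x -> X x -> x <> a -> P x.

Definition littleo_at (X : set T) (a : T) (f g : T -> C) : Prop :=
  forall M : R, 0 < M ->
    near_punct X a (fun x => `|f x| <= M%:C * `|g x|).

(* asymptotic sequence {phi_n}_{n>=1} (index 0 is ignored) *)
Definition asymp_seq (X : set T) (a : T) (phi : nat -> T -> C) : Prop :=
  forall n : nat, (0 < n)%N -> littleo_at X a (phi n.+1) (phi n).

(* N : option nat, with None meaning N = infinity *)
Definition within_order (N : option nat) (n : nat) : bool :=
  if N is Some k then (n <= k)%N else true.

Definition asymp_exp (X : set T) (a : T) (f : T -> C) (A : nat -> C)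
  (phi : nat -> T -> C) (N : option nat) : Prop :=
  forall n : nat, (0 < n)%N -> within_order N n ->
    littleo_at X a (fun x => f x - \sum_(1 <= k < n.+1) A k * phi k x) (phi n).
End Defs.

(* Main.v *)
Require Import Defs.
From HB Require Import structures.
From mathcomp Require Import all_boot all_order all_algebra.
From mathcomp Require Import all_classical all_reals topology.
From mathcomp Require Import complex.
From mathcomp Require Import ring lra.
Import Order.TTheory GRing.Theory Num.Theory.
Local Open Scope ring_scope.
Local Open Scope complex_scope.
Local Open Scope classical_set_scope.
Local Set Implicit Arguments. Local Unset Strict Implicit.
Section S.
Variable R : realType.
Definition nc (z : R[i]) : R := complex.Re `|z|.
Lemma ncE z : (nc z)%:C = `|z|.
Proof. by rewrite /nc RRe_real // normr_real. Qed.
Lemma nc_ge0 z : 0 <= nc z.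
Proof. by rewrite -lecR ncE rmorph0. Qed.
Lemma ncD z w : nc (z + w) <= nc z + nc w.
Proof. by rewrite -lecR rmorphD !ncE ler_normD. Qed.
Lemma ncM z w : nc (z * w) = nc z * nc w.
Proof. by apply: complexI; rewrite rmorphM !ncE normrM. Qed.
Lemma ncN z : nc (- z) = nc z.
Proof. by apply: complexI; rewrite !ncE normrN. Qed.
Lemma nc0 : nc 0 = 0.
Proof. by apply: complexI; rewrite ncE normr0 rmorph0. Qed.
Lemma ncle (M : R) z w : (`|z| <= M%:C * `|w|) = (nc z <= M * nc w).
Proof. by rewrite -!ncE -rmorphM lecR. Qed.

Variables (T : topologicalType) (X : set T) (a : T).
Definition loR (f g : T -> R[i]) := forall M : R, 0 < M ->
  near_punct X a (fun x => nc (f x) <= M * nc (g x)).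

Lemma np_mono (P Q : T -> Prop) : (forall x, P x -> Q x) ->
  near_punct X a P -> near_punct X a Q.
Proof. by move=> PQ [V [hV HV]]; exists V; split => // x Vx Xx xa; apply/PQ/HV. Qed.

Lemma np_and (P Q : T -> Prop) : near_punct X a P -> near_punct X a Q ->
  near_punct X a (fun x => P x /\ Q x).
Proof.
move=> [V [hV HV]] [W [hW HW]]; exists (V `&` W); split; first exact: filterI.
by move=> x [Vx Wx] Xx xa; split; [apply: HV|apply: HW].
Qed.

Lemma lo_iff f g : littleo_at X a f g <-> loR f g.
Proof.
by split => H M hM; apply: np_mono (H M hM) => x; rewrite ncle.
Qed.

Lemma lo_ext f g h : (forall x, f x = g x) -> loR f h -> loR g h.
Proof. by move=> e H M hM; apply: np_mono (H M hM) => x; rewrite e. Qed.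

Lemma lo0 h : loR (fun _ => 0) h.
Proof.
move=> M hM; exists setT; split; first exact: filterT.
by move=> x _ _ _; rewrite nc0 mulr_ge0 ?nc_ge0 // ltW.
Qed.

Lemma lo_add f g h : loR f h -> loR g h -> loR (fun x => f x + g x) h.
Proof.
move=> Hf Hg M hM; have h2 : 0 < M / 2 by rewrite divr_gt0.
apply: np_mono (np_and (Hf _ h2) (Hg _ h2)) => x [H1 H2].
apply: le_trans (ncD _ _) _; lra.
Qed.

Lemma lo_scale k f h : loR f h -> loR (fun x => k * f x) h.
Proof.
move=> Hf M hM.
have k1 : 0 < nc k + 1 by have := nc_ge0 k; lra.
have h2 : 0 < M / (nc k + 1) by rewrite divr_gt0.
have e : M / (nc k + 1) * (nc k + 1) = M by rewrite divfK // gt_eqF.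
apply: np_mono (Hf _ h2) => x H1; rewrite ncM.
move: H1 e h2; set M' := M / _ => H1 e h2.
have := nc_ge0 k; have := nc_ge0 (h x); have := nc_ge0 (f x).
rewrite -e; nra.
Qed.

Lemma lo_O f g h K : 0 < K -> loR f g ->
  near_punct X a (fun x => nc (g x) <= K * nc (h x)) -> loR f h.
Proof.
move=> hK Hf Hg M hM; have h2 : 0 < M / K by rewrite divr_gt0.
have e : M / K * K = M by rewrite divfK // gt_eqF.
apply: np_mono (np_and (Hf _ h2) Hg) => x [H1 H2].
move: H1 e h2; set M' := M / _ => H1 e h2.
have := nc_ge0 (g x); have := nc_ge0 (h x); rewrite -e; nra.
Qed.

Lemma lo_O' f g h K : 0 < K ->
  near_punct X a (fun x => nc (f x) <= K * nc (g x)) -> loR g h -> loR f h.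
Proof.
move=> hK Hf Hg M hM; have h2 : 0 < M / K by rewrite divr_gt0.
have e : M / K * K = M by rewrite divfK // gt_eqF.
apply: np_mono (np_and (Hg _ h2) Hf) => x [H1 H2].
move: H1 e h2; set M' := M / _ => H1 e h2.
have := nc_ge0 (g x); have := nc_ge0 (h x); rewrite -e; nra.
Qed.

Lemma lo_sum (s : seq nat) (F : nat -> T -> R[i]) h :
  (forall k, k \in s -> loR (F k) h) ->
  loR (fun x => \sum_(k <- s) F k x) h.
Proof.
elim: s => [|k s IH] H.
  by apply: lo_ext (lo0 h) => x; rewrite big_nil.
apply: lo_ext (lo_add (H k (mem_head _ _)) (IH _)) => [x|].
  by rewrite big_cons.
by move=> j js; apply: H; rewrite inE js orbT.
Qed.

Lemma ncB1 z w : nc z <= nc w + nc (z - w).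
Proof. by have := ncD w (z - w); rewrite addrC subrK. Qed.
Lemma ncB2 z w : nc z <= nc w + nc (w - z).
Proof. by have := ncD w (- (w - z)); rewrite ncN opprB addrC subrK. Qed.

End S.
Local Unset Implicit Arguments. Local Set Strict Implicit.

Theorem proposition2p2 (R : realType) (T : topologicalType) (X : set T) (a : T)
  (phi psi : nat -> T -> R[i]) :
  limit_point X a ->
  asymp_seq X a phi ->
  (forall n : nat, (0 < n)%N -> near_punct X a (fun x => phi n x != 0)) ->
  (forall n m : nat, (0 < n)%N -> (n <= m)%N ->
     littleo_at X a (fun x => psi n x - phi n x) (phi m)) ->
  asymp_seq X a psi /\
  (forall (N : option nat), (if N is Some k then (0 < k)%N else true) ->
   forall (f : T -> R[i]) (A : nat -> R[i]),
     asymp_exp X a f A phi N <-> asymp_exp X a f A psi N).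
Proof.
move=> _ Hphi _ H4.
have cmp1 n : (0 < n)%N -> near_punct X a (fun x => nc (phi n x) <= 2 * nc (psi n x)).
  move=> n0; have /lo_iff H := H4 n n n0 (leqnn n).
  have h2 : (0:R) < 1/2 by lra.
  apply: np_mono (H _ h2) => x H1.
  have := ncB2 (phi n x) (psi n x); lra.
have cmp2 n : (0 < n)%N -> near_punct X a (fun x => nc (psi n x) <= 2 * nc (phi n x)).
  move=> n0; have /lo_iff H := H4 n n n0 (leqnn n).
  have h2 : (0:R) < 1 by lra.
  apply: np_mono (H _ h2) => x H1.
  have := ncB1 (psi n x) (phi n x); lra.
have two : (0:R) < 2 by lra.
split.
  move=> n n0; apply/lo_iff.
  apply: (lo_O two _ (cmp1 n n0)).
  apply: (lo_O' two (cmp2 n.+1 isT)).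
  exact/lo_iff/Hphi.
move=> N _ f A.
have key n : (0 < n)%N -> 
  loR X a (fun x => \sum_(1 <= k < n.+1) A k * (psi k x - phi k x)) (phi n).
  move=> n0; apply: lo_sum => k; rewrite mem_index_iota => /andP[k1 kn].
  by apply: lo_scale; apply/lo_iff/H4.
have eD n x : \sum_(1 <= k < n.+1) A k * psi k x =
   \sum_(1 <= k < n.+1) A k * phi k x +
   \sum_(1 <= k < n.+1) A k * (psi k x - phi k x).
  by rewrite -big_split /=; apply: eq_bigr => k _; rewrite mulrBr addrC subrK.
split => H n n0 nN; apply/lo_iff.
- have Hn := H n n0 nN; move/lo_iff: Hn => Hn.
  have := lo_add (lo_O two Hn (cmp1 n n0))
     (lo_scale (-1) (lo_O two (key n n0) (cmp1 n n0))).
  apply: lo_ext => x; rewrite eD; ring.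
- have Hn := H n n0 nN; move/lo_iff: Hn => Hn.
  have := lo_add (lo_O two Hn (cmp2 n n0)) (key n n0).
  apply: lo_ext => x; rewrite eD; ring.
Qed.
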